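(* Let $L$ be a language expanding the language of rings and containing a unary function symbol $E$, and let $T$ be an $L$-theory expanding the theory of fields of characteristic $0$ which proves $E(x+y) = E(x)\cdot E(y)$ and $\exists z\, E(z) \neq 1$. Let $\mathcal{K}^\delta$ be an existentially closed model of $T_M^\delta$ with domain $K$, and let $c \in K$. Define $\Gamma_c = \{(E(x), E(cx)) : x \in K\} \subseteq K^2$ and $\delta_c : \Gamma_c \to K^2$, $(y,z) \mapsto (\delta y, \delta z)$. Then $\delta_c$ is surjective if and only if $\Gamma_c$ is Zariski dense in $K^2$.
   Context: $\delta$ is a new unary function symbol; $T^\delta$ is $T$ together with the axioms $\delta(x+y) = \delta x + \delta y$ and $\delta(xy) = x\,\delta y + y\,\delta x$. $T_M$ denotes the Morleyization of $T$ (in the language $L_M$ having a new relation symbol for each $L$-formula, interpreted as that formula), and $T_M^\delta$ is $T_M$ together with the derivation axioms. A model $M$ of $T_M^\delta$ is existentially closed if for every quantifier-free $L_M^\delta$-formula $\phi(\bar x,\bar y)$ and tuple $\bar a$ from $M$, whenever some extension $B \supseteq M$ with $B \models T_M^\delta$ satisfies $\exists \bar x\,\phi(\bar x,\bar a)$, then $M \models \exists\bar x\,\phi(\bar x,\bar a)$. Zariski dense means not contained in the zero set of a nonzero polynomial. *)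

(* Defs.v *)
From HB Require Import structures.
From mathcomp Require Import all_boot all_order all_algebra.
From mathcomp Require Import mpoly.
Set Implicit Arguments. Unset Strict Implicit. Unset Printing Implicit Defensive.
Import Order.TTheory GRing.Theory Num.Theory.
Local Open Scope ring_scope.

(* A first-order language L expanding the language of rings {0,1,+,-,*}
   by a unary function symbol E: the remaining (extra) function and
   relation symbols, with arities, are given by a signature. *)
Record sig := Sig {
  fsym : Type; farity : fsym -> nat;
  rsym : Type; rarity : rsym -> nat }.

Section Syntax.
Variable S : sig.

Inductive lterm : Type :=
| LVar : nat -> lterm
| LZero : lterm
| LOne : lterm
| LAdd : lterm -> lterm -> lterm
| LOpp : lterm -> lterm
| LMul : lterm -> lterm -> lterm
| LExp : lterm -> lterm
| LApp : forall f : fsym S, ('I_(@farity S f) -> lterm) -> lterm.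

Inductive lform : Type :=
| FEq : lterm -> lterm -> lform
| FRel : forall r : rsym S, ('I_(@rarity S r) -> lterm) -> lform
| FFalse : lform
| FImp : lform -> lform -> lform
| FAnd : lform -> lform -> lform
| FOr : lform -> lform -> lform
| FAll : nat -> lform -> lform
| FEx : nat -> lform -> lform.

Inductive dterm : Type :=
| DVar : nat -> dterm
| DZero : dterm
| DOne : dterm
| DAdd : dterm -> dterm -> dterm
| DOpp : dterm -> dterm
| DMul : dterm -> dterm -> dterm
| DExp : dterm -> dterm
| DApp : forall f : fsym S, ('I_(@farity S f) -> dterm) -> dterm
| DDer : dterm -> dterm.

(* The atomic formula [QMor phi s]
   is the Morleyization relation symbol R_phi (one for each L-formula phi)
   applied to the L^delta-terms s 0, s 1, ... substituted for the
   variables of phi. *)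
Inductive qform : Type :=
| QEq : dterm -> dterm -> qform
| QMor : lform -> (nat -> dterm) -> qform
| QFalse : qform
| QNot : qform -> qform
| QAnd : qform -> qform -> qform
| QOr : qform -> qform -> qform.

End Syntax.

(* L-structures.  Since every theory considered expands the theory of
   fields, the carrier is taken to be a field with the ring symbols
   interpreted by the field operations. *)
Record struc (S : sig) := Struc {
  scar : fieldType;
  sE : scar -> scar;
  sF : forall f : fsym S, ('I_(@farity S f) -> scar) -> scar;
  sR : forall r : rsym S, ('I_(@rarity S r) -> scar) -> Prop }.

(* L^delta-structures: an L-structure with an interpretation of delta.
   (As L_M-structures, the Morleyization symbols R_phi are interpreted
   by phi, see [qsat].) *)
Record dstruc (S : sig) := DStruc {
  dbase : struc S;
  dder : scar dbase -> scar dbase }.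

Arguments scar {S} s.
Arguments sE {S} s _.
Arguments sF {S} s f _.
Arguments sR {S} s r _.
Arguments dbase {S} d.
Arguments dder {S} d _.

Definition upd {T : Type} (v : nat -> T) (i : nat) (a : T) : nat -> T :=
  fun j => if j == i then a else v j.

Section Semantics.
Variable S : sig.

Fixpoint leval (M : struc S) (v : nat -> scar M) (t : lterm S) : scar M :=
  match t with
  | LVar i => v i
  | LZero => 0
  | LOne => 1
  | LAdd a b => leval v a + leval v b
  | LOpp a => - leval v a
  | LMul a b => leval v a * leval v b
  | LExp a => sE M (leval v a)
  | LApp f args => sF M f (fun k => leval v (args k))
  end.

Fixpoint lsat (M : struc S) (v : nat -> scar M) (phi : lform S) : Prop :=
  match phi with
  | FEq a b => leval v a = leval v b
  | FRel r args => sR M r (fun k => leval v (args k))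
  | FFalse => False
  | FImp p q => lsat v p -> lsat v q
  | FAnd p q => lsat v p /\ lsat v q
  | FOr p q => lsat v p \/ lsat v q
  | FAll i p => forall a, lsat (upd v i a) p
  | FEx i p => exists a, lsat (upd v i a) p
  end.

Fixpoint deval (M : dstruc S) (v : nat -> scar (dbase M)) (t : dterm S)
  : scar (dbase M) :=
  match t with
  | DVar i => v i
  | DZero => 0
  | DOne => 1
  | DAdd a b => deval v a + deval v b
  | DOpp a => - deval v a
  | DMul a b => deval v a * deval v b
  | DExp a => sE (dbase M) (deval v a)
  | DApp f args => sF (dbase M) f (fun k => deval v (args k))
  | DDer a => dder M (deval v a)
  end.

Fixpoint qsat (M : dstruc S) (v : nat -> scar (dbase M)) (psi : qform S)
  : Prop :=
  match psi with
  | QEq a b => deval v a = deval v b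
  | QMor phi s => lsat (fun i => deval v (s i)) phi
  | QFalse => False
  | QNot p => ~ qsat v p
  | QAnd p q => qsat v p /\ qsat v q
  | QOr p q => qsat v p \/ qsat v q
  end.

(* M is a model of the L-theory T (a set of L-sentences; formulas are read
   as their universal closures). *)
Definition models (T : lform S -> Prop) (M : struc S) : Prop :=
  forall phi, T phi -> forall v : nat -> scar M, lsat v phi.

Definition is_derivation (M : dstruc S) : Prop :=
  (forall x y, dder M (x + y) = dder M x + dder M y) /\
  (forall x y, dder M (x * y) = x * dder M y + y * dder M x).

Definition models_TMd (T : lform S -> Prop) (M : dstruc S) : Prop :=
  models T (dbase M) /\ is_derivation M.

Definition lmd_embedding (M B : dstruc S)
    (h : scar (dbase M) -> scar (dbase B)) : Prop :=
  (forall x y, h (x + y) = h x + h y) /\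
  (forall x y, h (x * y) = h x * h y) /\
  (forall x, h (- x) = - h x) /\
  h 0 = 0 /\ h 1 = 1 /\
  (forall x, h (sE (dbase M) x) = sE (dbase B) (h x)) /\
  (forall f a, h (sF (dbase M) f a) = sF (dbase B) f (fun k => h (a k))) /\
  (forall x, h (dder M x) = dder B (h x)) /\
  (forall phi (v : nat -> scar (dbase M)),
      lsat v phi <-> lsat (fun i => h (v i)) phi).

(* M is an existentially closed model of T_M^delta: for every
   quantifier-free L_M^delta-formula psi, every finite list xs of
   (existentially quantified) variables and every assignment v of the
   parameters in M, if some extension B of M that is a model of T_M^delta
   satisfies (exists xs, psi) with parameters v, then so does M. *)
Definition ec_model (T : lform S -> Prop) (M : dstruc S) : Prop :=
  models_TMd T M /\
  forall (psi : qform S) (xs : seq nat) (v : nat -> scar (dbase M)),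
    (exists (B : dstruc S) (h : scar (dbase M) -> scar (dbase B)),
        models_TMd T B /\ lmd_embedding h /\
        exists w : nat -> scar (dbase B),
          (forall i, i \notin xs -> w i = h (v i)) /\ qsat w psi) ->
    exists w : nat -> scar (dbase M),
      (forall i, i \notin xs -> w i = v i) /\ qsat w psi.

End Semantics.

Definition zariski_dense2 (K : fieldType) (G : K -> K -> Prop) : Prop :=
  forall p : {mpoly K[2]}, p != 0 ->
    exists a b, G a b /\ p.@[ [ffun i : 'I_2 => if i == ord0 then a else b] ] != 0.

(* Main.v *)
Require Import Defs.
From HB Require Import structures.
From mathcomp Require Import all_boot all_order all_algebra.
From mathcomp Require Import mpoly.
From mathcomp Require Import boolp classical_sets functions filter.
From Stdlib Require Import ClassicalEpsilon.
From mathcomp Require Import ring.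
Require Import Defs.
Set Implicit Arguments. Unset Strict Implicit. Unset Printing Implicit Defensive.
Import GRing.Theory.
Local Open Scope ring_scope.

Section UltraBasics.
Variables (I : Type) (U : set_system I) (HU : UltraFilter U).

Lemma UT : U (fun _ => True).
Proof. have := @filterT I U _; exact. Qed.

Lemma US (A B : I -> Prop) : (forall i, A i -> B i) -> U A -> U B.
Proof. by move=> AB; apply: (@filterS I U _ A B). Qed.

Lemma UI (A B : I -> Prop) : U A -> U B -> U (fun i => A i /\ B i).
Proof. by move=> ha hb; exact: (@filterI I U _ A B ha hb). Qed.

Lemma U0 : ~ U (fun _ => False).
Proof. exact: (@filter_not_empty I U _). Qed.

Lemma Uult (A : I -> Prop) : U A \/ U (fun i => ~ A i).
Proof. by have := @in_ultra_setVsetC I U A HU. Qed.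

Lemma Uall (A : I -> Prop) : (forall i, A i) -> U A.
Proof. move=> h; apply: (US (A := fun _ => True)); [by move=> i _; apply: h|exact: UT]. Qed.

Lemma Ufin (n : nat) (A : 'I_n -> I -> Prop) :
  (forall k, U (A k)) -> U (fun i => forall k, A k i).
Proof.
elim: n A => [|n IH] A hA.
  by apply: Uall => i [].
have h1 := IH (fun k => A (lift ord0 k)) (fun k => hA _).
have := UI (hA ord0) h1; apply: US => i [h0 h] k.
by case: (unliftP ord0 k) => [j ->|->].
Qed.

End UltraBasics.

Section UltraPower.
Variables (I : Type) (U : set_system I) (HU : UltraFilter U) (K : fieldType).

Definition aeq (f g : I -> K) := U (fun i => f i = g i).

Lemma aeq_refl f : aeq f f.
Proof. exact: (Uall HU). Qed.
Lemma aeq_sym f g : aeq f g -> aeq g f.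
Proof. by apply: (US HU) => i. Qed.
Lemma aeq_trans f g h : aeq f g -> aeq g h -> aeq f h.
Proof. by move=> a b; have := UI HU a b; apply: (US HU) => i [-> ->]. Qed.

Definition canon (f : I -> K) : I -> K :=
  epsilon (inhabits (fun _ : I => (0 : K))) (fun g => aeq f g).

Lemma canon_aeq f : aeq f (canon f).
Proof. by apply: (epsilon_spec _ (fun g => aeq f g)); exists f; apply: aeq_refl. Qed.

Lemma canon_eq f g : aeq f g -> canon f = canon g.
Proof.
move=> fg; rewrite /canon; congr epsilon; apply: funext => h.
apply: propext; split => a.
  exact: aeq_trans (aeq_sym fg) a.
exact: aeq_trans fg a.
Qed.

Lemma canon_idem f : canon (canon f) = canon f.
Proof. by apply: canon_eq; apply: aeq_sym; apply: canon_aeq. Qed.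

Definition UPt of UltraFilter U := {f : I -> K | canon f = f}.
Local Notation UP := (UPt HU).

HB.instance Definition _ := gen_eqMixin UP.
HB.instance Definition _ := gen_choiceMixin UP.

Definition cls (f : I -> K) : UP := exist _ (canon f) (canon_idem f).
Definition rep (x : UP) : I -> K := sval x.

Lemma clsK x : cls (rep x) = x.
Proof.
case: x => f hf; rewrite /cls /rep /=.
move: (canon_idem f); rewrite hf => e.
by apply: eq_exist.
Qed.

Lemma cls_eqP f g : cls f = cls g <-> aeq f g.
Proof.
split=> [e|a].
  have e' : canon f = canon g by move: e => /(congr1 sval).
  apply: aeq_trans (canon_aeq f) _; rewrite e'; exact: aeq_sym (canon_aeq g).
by apply: eq_exist; apply: canon_eq.
Qed.

Lemma rep_cls f : aeq (rep (cls f)) f.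
Proof. exact: aeq_sym (canon_aeq f). Qed.

Lemma cls_ae f g : aeq f g -> cls f = cls g.
Proof. by move/cls_eqP. Qed.

Definition uzero : UP := cls (fun _ => 0).
Definition uone : UP := cls (fun _ => 1).
Definition uadd (x y : UP) : UP := cls (fun i => rep x i + rep y i).
Definition uopp (x : UP) : UP := cls (fun i => - rep x i).
Definition umul (x y : UP) : UP := cls (fun i => rep x i * rep y i).
Definition uinv (x : UP) : UP := cls (fun i => (rep x i)^-1).

Lemma ae2 (A B C : I -> Prop) : U A -> U B -> (forall i, A i -> B i -> C i) -> U C.
Proof. by move=> a b h; have := UI HU a b; apply: (US HU) => i [] /h. Qed.

Lemma uaddE f g : uadd (cls f) (cls g) = cls (fun i => f i + g i).
Proof.
apply: cls_ae; apply: (ae2 (rep_cls f) (rep_cls g)) => i -> ->; done.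
Qed.
Lemma uoppE f : uopp (cls f) = cls (fun i => - f i).
Proof. by apply: cls_ae; apply: (US HU) (rep_cls f) => i ->. Qed.
Lemma umulE f g : umul (cls f) (cls g) = cls (fun i => f i * g i).
Proof.
apply: cls_ae; apply: (ae2 (rep_cls f) (rep_cls g)) => i -> ->; done.
Qed.
Lemma uinvE f : uinv (cls f) = cls (fun i => (f i)^-1).
Proof. by apply: cls_ae; apply: (US HU) (rep_cls f) => i ->. Qed.

Lemma UP_ind (P : UP -> Prop) : (forall f, P (cls f)) -> forall x, P x.
Proof. by move=> h x; rewrite -(clsK x); apply: h. Qed.

Lemma uaddA : associative uadd.
Proof.
elim/UP_ind=> f; elim/UP_ind=> g; elim/UP_ind=> h.
by rewrite !uaddE; congr cls; apply: funext => i; rewrite addrA.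
Qed.
Lemma uaddC : commutative uadd.
Proof.
elim/UP_ind=> f; elim/UP_ind=> g.
by rewrite !uaddE; congr cls; apply: funext => i; rewrite addrC.
Qed.
Lemma uadd0 : left_id uzero uadd.
Proof.
elim/UP_ind=> f.
by rewrite /uzero !uaddE; congr cls; apply: funext => i; rewrite add0r.
Qed.
Lemma uaddN : left_inverse uzero uopp uadd.
Proof.
elim/UP_ind=> f.
by rewrite uoppE !uaddE; congr cls; apply: funext => i; rewrite addNr.
Qed.

HB.instance Definition _ := GRing.isZmodule.Build UP uaddA uaddC uadd0 uaddN.

Lemma umulA : associative umul.
Proof.
elim/UP_ind=> f; elim/UP_ind=> g; elim/UP_ind=> h.
by rewrite !umulE; congr cls; apply: funext => i; rewrite mulrA.
Qed.
Lemma umulC : commutative umul.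
Proof.
elim/UP_ind=> f; elim/UP_ind=> g.
by rewrite !umulE; congr cls; apply: funext => i; rewrite mulrC.
Qed.
Lemma umul1 : left_id uone umul.
Proof.
elim/UP_ind=> f.
by rewrite /uone !umulE; congr cls; apply: funext => i; rewrite mul1r.
Qed.
Lemma umulDl : left_distributive umul uadd.
Proof.
elim/UP_ind=> f; elim/UP_ind=> g; elim/UP_ind=> h.
rewrite uaddE !umulE. rewrite uaddE. by congr cls; apply: funext => i; rewrite mulrDl.
Qed.
Lemma uone_neq0 : uone != uzero.
Proof.
apply/eqP => /cls_eqP e; apply: (U0 HU).
by apply: (US HU) e => i /eqP; rewrite oner_eq0.
Qed.

HB.instance Definition _ :=
  GRing.Zmodule_isComNzRing.Build UP umulA umulC umul1 umulDl uone_neq0.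

Lemma uzeroE : (0 : UP) = cls (fun _ => 0). Proof. by []. Qed.
Lemma uoneE : (1 : UP) = cls (fun _ => 1). Proof. by []. Qed.
Lemma uaddE' f g : (cls f + cls g : UP) = cls (fun i => f i + g i).
Proof. exact: uaddE. Qed.
Lemma umulE' f g : (cls f * cls g : UP) = cls (fun i => f i * g i).
Proof. exact: umulE. Qed.
Lemma uoppE' f : (- cls f : UP) = cls (fun i => - f i).
Proof. exact: uoppE. Qed.

Lemma umulVf (x : UP) : x != 0 -> uinv x * x = 1.
Proof.
elim/UP_ind: x => f; rewrite uzeroE => /eqP nz.
have nz' : U (fun i => f i != 0).
  case: (Uult HU (fun i => f i != 0)) => // h; exfalso; apply: nz.
  by apply: cls_ae; apply: (US HU) h => i /negP/negbNE/eqP.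
rewrite uinvE umulE' uoneE; apply: cls_ae; apply: (US HU) nz' => i h.
by rewrite mulVf.
Qed.
Lemma uinv0 : uinv 0 = 0.
Proof. by rewrite uzeroE uinvE; congr cls; apply: funext => i; rewrite invr0. Qed.

HB.instance Definition _ := GRing.ComNzRing_isField.Build UP umulVf uinv0.

Lemma uinvE' f : ((cls f)^-1 : UP) = cls (fun i => (f i)^-1).
Proof. exact: uinvE. Qed.

End UltraPower.

Section Los.
Variables (S : sig) (M : struc S) (I : Type) (U : set_system I) (HU : UltraFilter U).
Local Notation K := (scar M).
Local Notation Q := (@UPt I U K HU).

Definition uE (x : Q) : Q := cls HU (fun i => sE M (rep x i)).
Definition uF (f : fsym S) (a : 'I_(farity f) -> Q) : Q :=
  cls HU (fun i => sF M f (fun k => rep (a k) i)).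
Definition uR (r : rsym S) (a : 'I_(rarity r) -> Q) : Prop :=
  U (fun i => sR M r (fun k => rep (a k) i)).

Definition UPst : struc S := @Struc S Q uE uF uR.

Lemma uEE f : uE (cls HU f) = cls HU (fun i => sE M (f i)).
Proof. by apply: cls_ae => //; apply: (US HU) (rep_cls HU f) => i ->. Qed.

Lemma rep_cls_fin n (g : 'I_n -> I -> K) :
  U (fun i => forall k, rep (cls HU (g k)) i = g k i).
Proof. by apply: (Ufin HU) => k; apply: rep_cls. Qed.

Lemma uFE f (g : 'I_(farity f) -> I -> K) :
  uF (fun k => cls HU (g k)) = cls HU (fun i => sF M f (fun k => g k i)).
Proof.
apply: cls_ae => //; apply: (US HU) (rep_cls_fin g) => i h.
by congr (sF M f); apply: funext => k; rewrite h.
Qed.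

Lemma uRE r (g : 'I_(rarity r) -> I -> K) :
  uR (fun k => cls HU (g k)) <-> U (fun i => sR M r (fun k => g k i)).
Proof.
rewrite /uR; split => h; have := UI HU h (rep_cls_fin g); apply: (US HU) => i [] hs e.
  by have <- : (fun k => rep (cls HU (g k)) i) = (fun k => g k i) by apply: funext => k; rewrite e.
by have -> : (fun k => rep (cls HU (g k)) i) = (fun k => g k i) by apply: funext => k; rewrite e.
Qed.

Lemma los_term (w : I -> nat -> K) (t : lterm S) :
  leval (M := UPst) (fun j => cls HU (fun i => w i j)) t
  = cls HU (fun i => leval (w i) t).
Proof.
elim: t => [n|||a IHa b IHb|a IHa|a IHa b IHb|a IHa|f args IH] //=.
- by rewrite IHa IHb uaddE'.
- by rewrite IHa uoppE'.
- by rewrite IHa IHb umulE'.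
- by rewrite IHa /= uEE.
- have -> : (fun k => leval (M := UPst) (fun j => cls HU (fun i => w i j)) (args k))
     = (fun k => cls HU (fun i => leval (w i) (args k))) by apply: funext => k; apply: IH.
  by rewrite /= uFE.
Qed.

Lemma upd_cls (w : I -> nat -> K) j (a : Q) :
  upd (fun j0 => cls HU (fun i => w i j0)) j a
  = (fun j0 => cls HU (fun i => upd (w i) j (rep a i) j0)).
Proof.
apply: funext => j0; rewrite /upd; case: eqP => _ //.
by rewrite clsK.
Qed.

Definition choose_fun (P : I -> K -> Prop) : I -> K :=
  fun i => epsilon (inhabits 0) (P i).

Lemma choose_funP (P : I -> K -> Prop) i : (exists a, P i a) -> P i (choose_fun P i).
Proof. by move=> h; apply: epsilon_spec. Qed.

Lemma los (phi : lform S) : forall (w : I -> nat -> K),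
  lsat (M := UPst) (fun j => cls HU (fun i => w i j)) phi
  <-> U (fun i => lsat (w i) phi).
Proof.
elim: phi => [a b|r args||p IHp q IHq|p IHp q IHq|p IHp q IHq|j p IHp|j p IHp] w /=.
- by rewrite !los_term; apply: cls_eqP.
- have -> : (fun k => leval (M := UPst) (fun j => cls HU (fun i => w i j)) (args k))
     = (fun k => cls HU (fun i => leval (w i) (args k))) by apply: funext => k; apply: los_term.
  exact: (uRE (fun k i => leval (w i) (args k))).
- by split=> // h; apply: (U0 HU).
- split=> h.
    case: (Uult HU (fun i => lsat (w i) p)) => hp.
      have := (IHq w).1 (h ((IHp w).2 hp)); apply: (US HU) => i hq _; exact: hq.
    by apply: (US HU) hp => i hnp hp'; case: (hnp hp').
  move=> /(IHp w) hp; apply/(IHq w).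
  by have := UI HU h hp; apply: (US HU) => i [] f /f.
- split=> [[/(IHp w) hp /(IHq w) hq]|h].
    exact: (UI HU hp hq).
  by split; [apply/(IHp w)|apply/(IHq w)]; apply: (US HU) h => i [].
- split=> [[/(IHp w) hp|/(IHq w) hq]|h].
    by apply: (US HU) hp => i; left.
    by apply: (US HU) hq => i; right.
  case: (Uult HU (fun i => lsat (w i) p)) => hp; first by left; apply/(IHp w).
  right; apply/(IHq w); have := UI HU h hp; apply: (US HU) => i [[]] //.
- split=> h.
    case: (Uult HU (fun i => forall a, lsat (upd (w i) j a) p)) => // hn.
    pose P i a := ~ lsat (upd (w i) j a) p.
    have hc : U (fun i => P i (choose_fun P i)).
      apply: (US HU) hn => i hi; apply: choose_funP.
      by apply: contrapT => hh; apply: hi => a; apply: contrapT => hh'; apply: hh; exists a.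
    have := h (cls HU (choose_fun P)); rewrite upd_cls.
    move=> /(IHp (fun i j0 => upd (w i) j (rep (cls HU (choose_fun P)) i) j0)) hs.
    exfalso; apply: (U0 HU).
    have := UI HU (UI HU hs hc) (rep_cls HU (choose_fun P)).
    by apply: (US HU) => i [[hs' hc'] e]; apply: hc'; rewrite -e.
  move=> a; rewrite upd_cls.
  apply/(IHp (fun i j0 => upd (w i) j (rep a i) j0)).
  by apply: (US HU) h => i; apply.
- split=> [[a]|h].
    rewrite upd_cls => /(IHp (fun i j0 => upd (w i) j (rep a i) j0)).
    by apply: (US HU) => i ha; exists (rep a i).
  pose P i a := lsat (upd (w i) j a) p.
  exists (cls HU (choose_fun P)); rewrite upd_cls.
  apply/(IHp (fun i j0 => upd (w i) j (rep (cls HU (choose_fun P)) i) j0)).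
  have h2 := UI HU h (rep_cls HU (choose_fun P)).
  apply: (US HU _ h2) => i [hi e]; rewrite e; exact: (@choose_funP P i hi).
Qed.

End Los.

Section DerExt.
Variables (F : fieldType).

Definition subring (R : F -> Prop) :=
  [/\ R 1, (forall x y, R x -> R y -> R (x - y)) & (forall x y, R x -> R y -> R (x * y))].
Definition pder (R : F -> Prop) (D : F -> F) :=
  (forall x y, R x -> R y -> D (x + y) = D x + D y) /\
  (forall x y, R x -> R y -> D (x * y) = x * D y + y * D x).

Section Basic.
Variables (R : F -> Prop) (D : F -> F) (sR : subring R) (dD : pder R D).

Lemma R1 : R 1. Proof. by case: sR. Qed.
Lemma RB x y : R x -> R y -> R (x - y). Proof. by case: sR => _ h _; apply: h. Qed.
Lemma RM x y : R x -> R y -> R (x * y). Proof. by case: sR => _ _ h; apply: h. Qed.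
Lemma R0 : R 0. Proof. by rewrite -(subrr 1); apply: RB; apply: R1. Qed.
Lemma RN x : R x -> R (- x). Proof. by move=> h; rewrite -sub0r; apply: RB => //; apply: R0. Qed.
Lemma RD x y : R x -> R y -> R (x + y).
Proof. by move=> hx hy; rewrite -(opprK y); apply: RB => //; apply: RN. Qed.
Lemma RMn x n : R x -> R (x *+ n).
Proof. by move=> hx; elim: n => [|n IH]; [rewrite mulr0n; apply: R0|rewrite mulrS; apply: RD]. Qed.
Lemma Rsum n (f : 'I_n -> F) : (forall j, R (f j)) -> R (\sum_j f j).
Proof.
elim: n f => [|n IH] f h; first by rewrite big_ord0; apply: R0.
by rewrite big_ord_recr /=; apply: RD => //; apply: IH.
Qed.

Lemma DD x y : R x -> R y -> D (x + y) = D x + D y. Proof. by case: dD => h _; apply: h. Qed.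
Lemma DM x y : R x -> R y -> D (x * y) = x * D y + y * D x. Proof. by case: dD => _ h; apply: h. Qed.
Lemma dbl0 (x : F) : x = x + x -> x = 0.
Proof. by move=> /(congr1 (fun z => z - x)); rewrite addrK subrr => ->. Qed.
Lemma D0 : D 0 = 0.
Proof. by apply: dbl0; have := DD R0 R0; rewrite addr0. Qed.
Lemma DN x : R x -> D (- x) = - D x.
Proof.
move=> hx; have := DD hx (RN hx); rewrite subrr D0 => /esym/eqP.
by rewrite addrC addr_eq0 => /eqP.
Qed.
Lemma DB x y : R x -> R y -> D (x - y) = D x - D y.
Proof. by move=> hx hy; rewrite DD ?DN //; apply: RN. Qed.
Lemma D1 : D 1 = 0.
Proof. by apply: dbl0; have := DM R1 R1; rewrite mulr1 mul1r. Qed.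
Lemma Dsum n (f : 'I_n -> F) : (forall j, R (f j)) -> D (\sum_j f j) = \sum_j D (f j).
Proof.
elim: n f => [|n IH] f h; first by rewrite !big_ord0 D0.
rewrite !big_ord_recr /= DD ?IH //; first exact: Rsum.
Qed.

Definition polyR (g : {poly F}) := forall i, R g`_i.

Lemma polyR0 : polyR 0. Proof. by move=> i; rewrite coef0; apply: R0. Qed.
Lemma polyRB g k : polyR g -> polyR k -> polyR (g - k).
Proof. by move=> hg hk i; rewrite coefB; apply: RB. Qed.
Lemma polyRD g k : polyR g -> polyR k -> polyR (g + k).
Proof. by move=> hg hk i; rewrite coefD; apply: RD. Qed.
Lemma polyRM g k : polyR g -> polyR k -> polyR (g * k).
Proof. by move=> hg hk i; rewrite coefM; apply: Rsum => j; apply: RM. Qed.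
Lemma polyRC c : R c -> polyR c%:P.
Proof. by move=> hc i; rewrite coefC; case: eqP => _ //; apply: R0. Qed.
Lemma polyRX : polyR 'X.
Proof. by move=> i; rewrite coefX; case: eqP => _; [apply: R1|apply: R0]. Qed.
Lemma polyRXn n : polyR 'X^n.
Proof. by move=> i; rewrite coefXn; case: eqP => _; [apply: R1|apply: R0]. Qed.
Lemma polyRZ c g : R c -> polyR g -> polyR (c *: g).
Proof. by move=> hc hg i; rewrite coefZ; apply: RM. Qed.
Lemma polyR_deriv g : polyR g -> polyR g^`().
Proof. by move=> hg i; rewrite coef_deriv; apply: RMn. Qed.

Definition mD (g : {poly F}) := map_poly D g.
Lemma coef_mD g i : (mD g)`_i = D g`_i.
Proof. by rewrite /mD coef_map_id0 // D0. Qed.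

Lemma mD_add g k : polyR g -> polyR k -> mD (g + k) = mD g + mD k.
Proof. by move=> hg hk; apply/polyP => i; rewrite coefD !coef_mD coefD DD. Qed.
Lemma mD_opp g : polyR g -> mD (- g) = - mD g.
Proof. by move=> hg; apply/polyP => i; rewrite coefN !coef_mD coefN DN. Qed.
Lemma mD_C c : mD c%:P = (D c)%:P.
Proof. by apply/polyP => i; rewrite coef_mD !coefC; case: eqP => _ //; rewrite D0. Qed.
Lemma mD_X : mD 'X = 0.
Proof. by apply/polyP => i; rewrite coef_mD coefX coef0; case: eqP => _; rewrite ?D1 ?D0. Qed.
Lemma mD_mul g k : polyR g -> polyR k -> mD (g * k) = mD g * k + g * mD k.
Proof.
move=> hg hk; apply/polyP => i; rewrite coefD !coefM coef_mD coefM.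
rewrite Dsum => [|j]; last by apply: RM.
rewrite -big_split /=; apply: eq_bigr => j _.
by rewrite DM // !coef_mD addrC; congr (_ + _); apply: mulrC.
Qed.

Variables (beta v : F).
Definition Phi (g : {poly F}) := (mD g).[beta] + (g^`()).[beta] * v.

Lemma Phi_add g k : polyR g -> polyR k -> Phi (g + k) = Phi g + Phi k.
Proof.
move=> hg hk; rewrite /Phi mD_add // derivD !hornerD mulrDl.
by rewrite -!addrA; congr (_ + _); rewrite addrCA.
Qed.
Lemma Phi_opp g : polyR g -> Phi (- g) = - Phi g.
Proof. by move=> hg; rewrite /Phi mD_opp // derivN !hornerN mulNr opprD. Qed.
Lemma Phi_sub g k : polyR g -> polyR k -> Phi (g - k) = Phi g - Phi k.
Proof.
move=> hg hk; rewrite Phi_add ?Phi_opp //.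
by move=> i; rewrite coefN; apply: RN.
Qed.
Lemma Phi_mul g k : polyR g -> polyR k ->
  Phi (g * k) = Phi g * k.[beta] + g.[beta] * Phi k.
Proof.
move=> hg hk; rewrite /Phi mD_mul // derivM !hornerD !hornerM; ring.
Qed.
Lemma Phi_C c : Phi c%:P = D c.
Proof. by rewrite /Phi mD_C derivC !hornerC mul0r addr0. Qed.
Lemma Phi_X : Phi 'X = v.
Proof. by rewrite /Phi mD_X derivX horner0 hornerC mul1r add0r. Qed.
Lemma Phi_0 : Phi 0 = 0.
Proof. by rewrite -(subrr 0) Phi_sub ?subrr //; apply: polyR0. Qed.

End Basic.
Definition adj (R : F -> Prop) (beta : F) (y : F) := exists g, polyR R g /\ y = g.[beta].

Lemma adjoin R D beta v : subring R -> pder R D ->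
  (forall g, polyR R g -> g.[beta] = 0 -> Phi D beta v g = 0) ->
  exists D', [/\ subring (adj R beta), pder (adj R beta) D',
     (forall x, R x -> adj R beta x /\ D' x = D x), adj R beta beta & D' beta = v].
Proof.
move=> sR dD hPhi.
pose ch y := epsilon (inhabits 0) (fun g => polyR R g /\ y = g.[beta]).
pose D' y := Phi D beta v (ch y).
have chP y : adj R beta y -> polyR R (ch y) /\ y = (ch y).[beta].
  by move=> h; apply: (epsilon_spec (inhabits 0) (fun g => polyR R g /\ y = g.[beta])).
have D'E g : polyR R g -> D' g.[beta] = Phi D beta v g.
  move=> hg; have [h1 h2] := chP g.[beta] (ex_intro _ g (conj hg erefl)).
  apply/eqP; rewrite -subr_eq0 -(Phi_sub sR dD) //; apply/eqP; apply: hPhi.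
    exact: (polyRB sR).
  by rewrite hornerD hornerN -h2 subrr.
exists D'; split.
- split.
  + by exists 1; split; [apply: (polyRC sR); apply: R1|rewrite hornerC].
  + move=> _ _ [g [hg ->]] [k [hk ->]]; exists (g - k); split; first exact: (polyRB sR).
    by rewrite hornerD hornerN.
  + move=> _ _ [g [hg ->]] [k [hk ->]]; exists (g * k); split; first exact: (polyRM sR).
    by rewrite hornerM.
- split.
  + move=> _ _ [g [hg ->]] [k [hk ->]].
    by rewrite -hornerD !D'E ?(Phi_add sR dD) //; apply: (polyRD sR).
  + move=> _ _ [g [hg ->]] [k [hk ->]].
    rewrite -hornerM !D'E ?(Phi_mul sR dD) //; last by apply: (polyRM sR).
    ring.
- move=> x hx; have hc := polyRC sR hx; split; first by exists x%:P; rewrite hornerC.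
  by rewrite -{1}(hornerC x beta) D'E // (Phi_C sR dD).
- by exists 'X; split; [apply: polyRX|rewrite hornerX].
- by have := D'E 'X (polyRX sR); rewrite hornerX (Phi_X sR dD).
Qed.

Definition loc (R : F -> Prop) (y : F) := exists r s, [/\ R r, R s, s != 0 & y = r / s].

Lemma localize R D : subring R -> pder R D ->
  exists D', [/\ subring (loc R), pder (loc R) D',
    (forall x, R x -> loc R x /\ D' x = D x) & (forall x, R x -> x != 0 -> loc R x^-1)].
Proof.
move=> sR dD.
pose P y (p : F * F) := [/\ R p.1, R p.2, p.2 != 0 & y = p.1 / p.2].
pose ch y := epsilon (inhabits (0, 1)) (P y).
pose D' y := ((ch y).2 * D (ch y).1 - (ch y).1 * D (ch y).2) / (ch y).2 ^+ 2.
have D'E r s : R r -> R s -> s != 0 -> D' (r / s) = (s * D r - r * D s) / s ^+ 2.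
  move=> hr hs s0.
  have [hr' hs' s0' e] : P (r / s) (ch (r / s)).
    by apply: epsilon_spec; exists (r, s).
  rewrite /D'; move: (ch _) hr' hs' s0' e => [r' s'] /= hr' hs' s0' e.
  have e1 : r' = r / s * s' by rewrite e mulfVK.
  have e0 : r * s' = r' * s by rewrite e1; field.
  have e2 : D r' = (r * D s' + s' * D r - r' * D s) / s.
    have := congr1 D e0; rewrite !(DM dD) // => e3.
    by rewrite e3; field.
  by rewrite e2 e1; field; rewrite ?s0 ?s0'.
have Dadd (r s : F) : R r -> R s -> D (r + s) = D r + D s by apply: (DD dD).
have Dmul (r s : F) : R r -> R s -> D (r * s) = r * D s + s * D r by apply: (DM dD).
exists D'; split.
- split.
  + by exists 1, 1; split; rewrite ?divr1 ?oner_eq0 //; apply: (R1 sR).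
  + move=> _ _ [r1 [s1 [h1 h2 h3 ->]]] [r2 [s2 [h4 h5 h6 ->]]].
    exists (r1 * s2 - r2 * s1), (s1 * s2); split.
    * by apply: (RB sR); apply: (RM sR).
    * by apply: (RM sR).
    * by rewrite mulf_neq0.
    * by field; rewrite h3 h6.
  + move=> _ _ [r1 [s1 [h1 h2 h3 ->]]] [r2 [s2 [h4 h5 h6 ->]]].
    exists (r1 * r2), (s1 * s2); split.
    * by apply: (RM sR).
    * by apply: (RM sR).
    * by rewrite mulf_neq0.
    * by field; rewrite h3 h6.
- split.
  + move=> _ _ [r1 [s1 [h1 h2 h3 ->]]] [r2 [s2 [h4 h5 h6 ->]]].
    have -> : r1 / s1 + r2 / s2 = (r1 * s2 + r2 * s1) / (s1 * s2) by field; rewrite h3 h6.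
    rewrite !D'E //; try (by apply: (RD sR); apply: (RM sR)); try (by apply: (RM sR));
      last by rewrite mulf_neq0.
    rewrite Dadd; try (by apply: (RM sR)).
    rewrite !Dmul //.
    by field; rewrite h3 h6.
  + move=> _ _ [r1 [s1 [h1 h2 h3 ->]]] [r2 [s2 [h4 h5 h6 ->]]].
    have -> : r1 / s1 * (r2 / s2) = (r1 * r2) / (s1 * s2) by field; rewrite h3 h6.
    rewrite !D'E //; try (by apply: (RM sR)); last by rewrite mulf_neq0.
    rewrite !Dmul //.
    by field; rewrite h3 h6.
- move=> x hx; have h1 := R1 sR; split.
    by exists x, 1; split; rewrite ?divr1 ?oner_eq0.
  by have := D'E x 1 hx h1 (oner_neq0 _); rewrite divr1 => ->; rewrite (D1 sR dD) mul1r mulr0 subr0 expr1n divr1.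
- move=> x hx x0; exists 1, x; split; rewrite ?div1r //; exact: (R1 sR).
Qed.

Lemma exmin (P : nat -> Prop) : (exists n, P n) -> exists n, P n /\ forall m, P m -> (n <= m)%N.
Proof.
move=> [n hn]; elim: n {-2}n (leqnn n) hn => [|N IH] n hn Pn.
  by exists n; split => // m _; move: hn; rewrite leqn0 => /eqP ->.
case: (classic (exists m, P m /\ (m < n)%N)) => [[m [Pm lt]]|nex].
  by apply: (IH m) => //; rewrite -ltnS (leq_trans lt).
exists n; split => // m Pm; rewrite leqNgt; apply/negP => lt; apply: nex; exists m; split => //.
Qed.

Lemma size_sub_lt (g r : {poly F}) : g != 0 -> size r = size g -> lead_coef r = lead_coef g ->
  (size (g - r)%R < size g)%N.
Proof.
move=> g0 sr lr; have sg : (0 < size g)%N by rewrite size_poly_gt0.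
rewrite -(prednK sg) ltnS; apply/leq_sizeP => j hj.
rewrite coefB; case: (ltngtP j (size g).-1) => [|lt|->].
- by rewrite ltnNge hj.
- have hj' : (size g <= j)%N by rewrite -(prednK sg).
  by rewrite !nth_default ?subrr // sr.
- by have := lr; rewrite /lead_coef sr => ->; rewrite subrr.
Qed.

Lemma alg_cond (char0 : [pchar F] =i pred0) R D beta : subring R -> pder R D ->
  (forall x, R x -> x != 0 -> R x^-1) ->
  exists v, forall g, polyR R g -> g.[beta] = 0 -> Phi D beta v g = 0.
Proof.
move=> sR dD inv.
case: (classic (exists g, [/\ polyR R g, g != 0 & g.[beta] = 0])) => [ex|nex]; last first.
  exists 0 => g hg g0; case: (eqVneq g 0) => [->|gn0]; first exact: (Phi_0 sR dD).
  by exfalso; apply: nex; exists g.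
have [n [[p [hp p0 pb sp]] nmin]] :
    exists n, (exists g, [/\ polyR R g, g != 0, g.[beta] = 0 & size g = n]) /\
      forall m, (exists g, [/\ polyR R g, g != 0, g.[beta] = 0 & size g = m]) -> (n <= m)%N.
  by apply: exmin; case: ex => g [h1 h2 h3]; exists (size g), g; split.
have mins g : polyR R g -> g != 0 -> g.[beta] = 0 -> (n <= size g)%N.
  by move=> h1 h2 h3; apply: nmin; exists g.
have s2 : (2 <= size p)%N.
  rewrite ltnNge; apply/negP => s1; move: (size1_polyC s1) => e.
  move: pb; rewrite e hornerC => e0; move: p0; by rewrite e e0 eqxx.
have dp0 : p^`() != 0.
  apply/eqP => e.
  have := congr1 (fun q : {poly F} => q`_(size p).-2) e; rewrite coef_deriv coef0 => /eqP.
  rewrite -mulr_natr mulf_eq0 => /orP [h|h].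
    have e2 : (size p).-2.+1 = (size p).-1 by case: (size p) s2 => [|[|k]].
    by move: h; rewrite e2 -/(lead_coef p) lead_coef_eq0 (negbTE p0).
  by move: h; rewrite ((pcharf0P F).1 char0).
have dpb : p^`().[beta] != 0.
  apply/eqP => e; have := mins _ (polyR_deriv sR hp) dp0 e.
  by rewrite -sp leqNgt (lt_size_deriv p0).
exists (- (mD D p).[beta] / p^`().[beta]).
set v := - _ / _.
have Phip : Phi D beta v p = 0 by rewrite /Phi /v; field.
have main m : forall g : {poly F}, (size g <= m)%N -> polyR R g -> g.[beta] = 0 -> Phi D beta v g = 0.
  elim: m => [|m IH] g sg hg gb.
    by move: sg; rewrite leqn0 size_poly_eq0 => /eqP ->; apply: (Phi_0 sR dD).
  case: (eqVneq g 0) => [->|g0]; first exact: (Phi_0 sR dD).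
  have ng := mins _ hg g0 gb.
  pose c := lead_coef g / lead_coef p.
  have lp0 : lead_coef p != 0 by rewrite lead_coef_eq0.
  have lg0 : lead_coef g != 0 by rewrite lead_coef_eq0.
  have c0 : c != 0 by rewrite mulf_neq0 ?invr_eq0.
  have hc : R c by apply: (RM sR); [exact: hg|apply: inv => //; exact: hp].
  pose A := c *: 'X^(size g - n).
  have hA : polyR R A by apply: (polyRZ sR) => //; apply: (polyRXn sR).
  have A0 : A != 0 by rewrite scaler_eq0 negb_or c0 /= -size_poly_eq0 size_polyXn.
  have sA : size A = (size g - n).+1 by rewrite size_scale // size_polyXn.
  pose r := A * p.
  have sr : size r = size g.
    by rewrite size_mul // sA sp addSn /= subnK.
  have lr : lead_coef r = lead_coef g.
    by rewrite lead_coefM lead_coefZ lead_coefXn mulr1 /c mulfVK.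
  have hr : polyR R r by apply: (polyRM sR).
  have hg1 : polyR R (g - r) by apply: (polyRB sR).
  have g1b : (g - r).[beta] = 0 by rewrite hornerD hornerN hornerM pb mulr0 gb subrr.
  have sg1 := size_sub_lt g0 sr lr.
  have := IH (g - r) _ hg1 g1b; rewrite (Phi_sub sR dD) // (Phi_mul sR dD) // Phip pb.
  rewrite !mulr0 addr0 subr0; apply.
  by rewrite -ltnS (leq_trans sg1).
by move=> g hg gb; apply: (main (size g)).
Qed.

Theorem der_extend (char0 : [pchar F] =i pred0) R0 D0 : subring R0 -> pder R0 D0 ->
  exists D : F -> F, [/\ (forall x y, D (x + y) = D x + D y),
    (forall x y, D (x * y) = x * D y + y * D x) & (forall x, R0 x -> D x = D0 x)].
Proof.
move=> sR0 dD0.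
pose good (p : (F -> Prop) * (F -> F)) :=
  [/\ subring p.1, pder p.1 p.2 & forall x, R0 x -> p.1 x /\ p.2 x = D0 x].
pose T := {p | good p}.
have g0 : good (R0, D0) by split.
pose t0 : T := exist _ (R0, D0) g0.
pose leP (s t : T) := forall x, (sval s).1 x -> (sval t).1 x /\ (sval t).2 x = (sval s).2 x.
pose le (s t : T) := `[< leP s t >].
have leE s t : le s t <-> leP s t by split => [/asboolP|?]; [|apply/asboolP].
have [t tmax] : exists t, premaximal le t.
  apply: (ZL_preorder t0).
  - by move=> s; apply/leE => x h.
  - move=> r s u /leE h1 /leE h2; apply/leE => x /h1 [/h2 [h3 h4] h5]; split => //.
    by rewrite h4 h5.
  - move=> A Atot.
    case: (classic (exists s, A s)) => [[s0 As0]|nA]; last first.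
      by exists t0 => s As; exfalso; apply: nA; exists s.
    pose sel x := epsilon (inhabits t0) (fun s => A s /\ (sval s).1 x).
    pose Ru x := exists s, A s /\ (sval s).1 x.
    pose Du x := (sval (sel x)).2 x.
    have selP x : Ru x -> A (sel x) /\ (sval (sel x)).1 x.
      by move=> h; apply: (epsilon_spec (inhabits t0) (fun s => A s /\ (sval s).1 x)).
    have cons s x : A s -> (sval s).1 x -> Du x = (sval s).2 x.
      move=> As hx; have [As' hx'] := selP x (ex_intro _ s (conj As hx)).
      rewrite /Du.
      case: (Atot _ _ As As') => /leE h.
        by have [_ ->] := h x hx.
      by have [_ ->] := h x hx'.
    have common s1 s2 : A s1 -> A s2 -> exists s, [/\ A s, leP s1 s & leP s2 s].
      move=> A1 A2; case: (Atot _ _ A1 A2) => /leE h.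
        by exists s2; split => // x hx.
      by exists s1; split => // x hx.
    have gu : good (Ru, Du).
      split.
      - split.
        + exists s0; split => //; case: (svalP s0) => [[]]. done.
        + move=> x y [s1 [A1 h1]] [s2 [A2 h2]].
          have [s [As l1 l2]] := common _ _ A1 A2.
          exists s; split => //; case: (svalP s) => [[_ hB _] _ _].
          by apply: hB; [case: (l1 x h1)|case: (l2 y h2)].
        + move=> x y [s1 [A1 h1]] [s2 [A2 h2]].
          have [s [As l1 l2]] := common _ _ A1 A2.
          exists s; split => //; case: (svalP s) => [[_ _ hM] _ _].
          by apply: hM; [case: (l1 x h1)|case: (l2 y h2)].
      - split.
        + move=> x y [s1 [A1 h1]] [s2 [A2 h2]].
          have [s [As l1 l2]] := common _ _ A1 A2.
          have [hx _] := l1 x h1; have [hy _] := l2 y h2.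
          case: (svalP s) => sr [dA dM] _.
          rewrite /= !(cons s) //; first by apply: dA.
          by apply: (RD sr).
        + move=> x y [s1 [A1 h1]] [s2 [A2 h2]].
          have [s [As l1 l2]] := common _ _ A1 A2.
          have [hx _] := l1 x h1; have [hy _] := l2 y h2.
          case: (svalP s) => sr [dA dM] _.
          rewrite /= !(cons s) //; first by apply: dM.
          by apply: (RM sr).
      - move=> x hx; case: (svalP s0) => _ _ /(_ x hx) [h1 h2].
        by split; [exists s0|rewrite /= (cons s0)].
    exists (exist _ (Ru, Du) gu) => s As; apply/leE => x hx /=.
    by split; [exists s|apply: cons].
have bigger p (gp : good p) : leP t (exist _ p gp) -> forall x, p.1 x -> (sval t).1 x.
  move=> l x hx; have := tmax (exist _ p gp) ((leE _ _).2 l) => /leE h.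
  by case: (h x hx).
case: (svalP t) => sR dD base.
have inv x : (sval t).1 x -> x != 0 -> (sval t).1 x^-1.
  move=> hx x0.
  have [D' [sL dL ext invL]] := localize sR dD.
  have gL : good (loc (sval t).1, D').
    split => // y hy; have [h1 h2] := base y hy; have [h3 h4] := ext y h1.
    by split => //; rewrite /= h4.
  apply: (bigger _ gL); last exact: invL.
  by move=> y hy /=; have [h3 h4] := ext y hy.
have all b : (sval t).1 b.
  have [v hv] := alg_cond char0 b sR dD inv.
  have [D'' [sA dA ext Ab Dv]] := adjoin sR dD hv.
  have gA : good (adj (sval t).1 b, D'').
    split => // y hy; have [h1 h2] := base y hy; have [h3 h4] := ext y h1.
    by split => //; rewrite /= h4.
  apply: (bigger _ gA) Ab.
  by move=> y hy /=; have [h3 h4] := ext y hy.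
exists (sval t).2; split.
- by move=> x y; case: dD => h _; apply: h.
- by move=> x y; case: dD => _ h; apply: h.
- by move=> x hx; case: (base x hx).
Qed.

End DerExt.

Section Nested.
Variable K : fieldType.

Definition ev2 (G : {poly {poly K}}) (y z : K) := (map_poly (horner_eval y) G).[z].

Definition pt2 (a b : K) : 'I_2 -> K := [ffun i : 'I_2 => if i == ord0 then a else b].

Definition to_mp (G : {poly {poly K}}) : {mpoly K[2]} :=
  (map_poly (fun q : {poly K} => (map_poly (@mpolyC 2 K) q).['X_ord0]) G).['X_ord_max].

Lemma to_mpE G a b : (to_mp G).@[pt2 a b] = ev2 G a b.
Proof.
rewrite /to_mp -horner_map /= mevalXU /pt2 ffunE /=.
rewrite -map_poly_comp_id0; last by rewrite meval0.
rewrite /ev2; congr (_.[_]); apply: eq_map_poly => q /=.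
rewrite -horner_map /= mevalXU ffunE /= -map_poly_comp_id0; last first.
  by rewrite meval0.
rewrite (eq_map_poly (g := id)) ?map_poly_id // => x /=; exact: mevalC.
Qed.

Lemma poly_vanish (char0 : [pchar K] =i pred0) (p : {poly K}) : (forall z, p.[z] = 0) -> p = 0.
Proof.
move=> h; apply/eqP; apply: contraT => p0.
have := max_poly_roots p0 (rs := [seq i%:R | i <- iota 0 (size p)]).
rewrite size_map size_iota ltnn; apply.
  by apply/allP => x /mapP [i _ ->]; rewrite /root h.
rewrite map_inj_uniq ?iota_uniq // => i j /eqP; rewrite -subr_eq0.
wlog le : i j / (j <= i)%N.
  move=> hw; case: (leqP j i) => [|/ltnW] l; first exact: hw.
  by rewrite -opprB oppr_eq0 => e; apply/esym; apply: hw.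
by rewrite -natrB // ((pcharf0P K).1 char0) subn_eq0 => e; apply/eqP; rewrite eqn_leq e le.
Qed.

Lemma ev2_vanish (char0 : [pchar K] =i pred0) G : (forall y z, ev2 G y z = 0) -> G = 0.
Proof.
move=> h; apply/polyP => i; rewrite coef0; apply: (poly_vanish char0) => y.
have := poly_vanish char0 (h y); move/(congr1 (fun q : {poly K} => q`_i)).
by rewrite coef_map coef0.
Qed.

End Nested.

Lemma dedekind (X : Type) (add : X -> X -> X) (x0 : X) (K : fieldType) (Ix : eqType)
  (chi : Ix -> X -> K) (hom : forall m x y, chi m (add x y) = chi m x * chi m y)
  (one : forall m, chi m x0 = 1) (s : seq Ix) :
  uniq s ->
  (forall m m', m \in s -> m' \in s -> m != m' -> exists y, chi m y != chi m' y) ->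
  forall a : Ix -> K, (forall x, \sum_(m <- s) a m * chi m x = 0) ->
  forall m, m \in s -> a m = 0.
Proof.
elim: s => [|m0 s IH] //= /andP [m0s us] dist a H.
have dist' m m' : m \in s -> m' \in s -> m != m' -> exists y, chi m y != chi m' y.
  by move=> h1 h2; apply: dist; rewrite inE ?h1 ?h2 orbT.
have Hs x : \sum_(m <- s) a m * chi m x = - (a m0 * chi m0 x).
  by move: (H x); rewrite big_cons => e; apply: (addrI (a m0 * chi m0 x)); rewrite addrN.
have zs : forall m, m \in s -> a m = 0.
  move=> m ms.
  have mm0 : m != m0 by apply: contraNneq m0s => <-.
  have := dist m m0; rewrite inE ms orbT inE eqxx => /(_ isT isT mm0) [y' hy'].
  have hyp : forall x, \sum_(m <- s) (a m * (chi m y' - chi m0 y')) * chi m x = 0.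
    move=> x.
    have -> : \sum_(m <- s) a m * (chi m y' - chi m0 y') * chi m x
      = \sum_(m <- s) a m * chi m (add x y') - chi m0 y' * \sum_(m <- s) a m * chi m x.
      rewrite mulr_sumr -sumrB; apply: eq_bigr => i _; rewrite hom; ring.
    by rewrite !Hs hom; ring.
  have := IH us dist' (fun m => a m * (chi m y' - chi m0 y')) hyp m ms.
  by move/eqP; rewrite mulf_eq0 subr_eq0 (negbTE hy') orbF => /eqP.
move=> m; rewrite inE => /orP [/eqP ->|]; last exact: zs.
have := Hs x0; rewrite big_seq_cond (eq_bigr (fun _ => 0)).
  by rewrite big1 // one mulr1 => /esym /eqP; rewrite oppr_eq0 => /eqP.
by move=> i /andP [hi _]; rewrite zs // mul0r.
Qed.

Lemma natr_inj (K : fieldType) (char0 : [pchar K] =i pred0) (i j : nat) :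
  (i%:R : K) = j%:R -> i = j.
Proof.
move=> /eqP; rewrite -subr_eq0.
wlog le : i j / (j <= i)%N.
  move=> hw; case: (leqP j i) => [|/ltnW] l; first exact: hw.
  by rewrite -opprB oppr_eq0 => e; apply/esym; apply: hw.
by rewrite -natrB // ((pcharf0P K).1 char0) subn_eq0 => e; apply/eqP; rewrite eqn_leq e le.
Qed.

Lemma mulrn_inj (K : fieldType) (char0 : [pchar K] =i pred0) (x : K) (i j : nat) :
  x != 0 -> x *+ i = x *+ j -> i = j.
Proof. by move=> x0; rewrite -[x *+ i]mulr_natr -[x *+ j]mulr_natr => /(mulfI x0) /(natr_inj char0). Qed.

Section Forward.
Variables (K : fieldType) (char0 : [pchar K] =i pred0) (E d : K -> K) (c : K).
Hypothesis HE : forall x y, E (x + y) = E x * E y.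
Hypothesis dA : forall x y, d (x + y) = d x + d y.
Hypothesis dM : forall x y, d (x * y) = x * d y + y * d x.

Lemma fd0 : d 0 = 0.
Proof.
have h := dA 0 0; rewrite addr0 in h.
have := congr1 (fun z => z - d 0) h; rewrite /= addrK subrr => e; exact: esym e.
Qed.

Lemma fd1 : d 1 = 0.
Proof.
have h := dM 1 1; rewrite !mul1r in h.
have := congr1 (fun z => z - d 1) h; rewrite /= addrK subrr => e; exact: esym e.
Qed.
Lemma der_pow' u n : u * d (u ^+ n) = u ^+ n * d u * n%:R.
Proof.
elim: n => [|n IH]; first by rewrite expr0 mulr0 fd1 mulr0.
have -> : u * d (u ^+ n.+1) = u * (u * d (u ^+ n)) + u * (u ^+ n * d u)
  by rewrite exprS dM mulrDr.
by rewrite IH exprS -addn1 natrD; ring.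
Qed.
Lemma der_pow u n : u * d (u ^+ n) = (u ^+ n * d u) *+ n.
Proof. by rewrite der_pow' mulr_natr. Qed.
Lemma der_mon u w i j : u * w * d (u ^+ i * w ^+ j) =
  (u ^+ i * w ^+ j * w * d u) *+ i + (u ^+ i * w ^+ j * u * d w) *+ j.
Proof.
rewrite dM mulrDr.
have e1 : u * w * (u ^+ i * d (w ^+ j)) = u * u ^+ i * (w * d (w ^+ j)) by ring.
have e2 : u * w * (w ^+ j * d (u ^+ i)) = w * w ^+ j * (u * d (u ^+ i)) by ring.
rewrite e1 e2 !der_pow' -[X in _ = X + _]mulr_natr -[X in _ = _ + X]mulr_natr; ring.
Qed.
Hypothesis surj : forall a b, exists x, (d (E x), d (E (c * x))) = (a, b).

Lemma E0 : E 0 = 1.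
Proof.
have [x1 [h1 _]] := surj 1 0.
have e : E 0 * (E 0 - 1) = 0 by rewrite mulrBr mulr1 -HE addr0 subrr.
move/eqP: e; rewrite mulf_eq0 subr_eq0 => /orP [/eqP h|/eqP //].
by move: h1; rewrite -(addr0 x1) HE h mulr0 fd0 => /eqP; rewrite eq_sym oner_eq0.
Qed.

Lemma Enz x : E x != 0.
Proof.
apply/negP => /eqP h; have := HE x (- x); rewrite subrr E0 h mul0r => /eqP.
by rewrite oner_eq0.
Qed.

Definition chi (m : 'X_{1..2}) x := E x ^+ m ord0 * E (c * x) ^+ m ord_max.

Lemma surj_dense : zariski_dense2 (fun y z => exists x, y = E x /\ z = E (c * x)).
Proof.
move=> P P0; apply: contrapT => hn.
have Hz x : P.@[pt2 (E x) (E (c * x))] = 0.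
  case: (eqVneq (P.@[pt2 (E x) (E (c * x))]) 0) => // h; exfalso; apply: hn; exists (E x), (E (c * x)); split => //.
  by exists x.
have Hs x : \sum_(m <- msupp P) P@_m * chi m x = 0.
  apply: etrans (Hz x); rewrite mevalE; apply: eq_bigr => m _; congr (_ * _).
  by rewrite /chi big_ord_recr big_ord1 /pt2 !ffunE /= (_ : widen_ord _ _ = ord0) //; apply: val_inj.
have hom m x y : chi m (x + y) = chi m x * chi m y.
  by rewrite /chi mulrDr !HE !exprMn; ring.
have one m : chi m 0 = 1 by rewrite /chi mulr0 E0 !expr1n mulr1.
have [x1 e1] := surj 1 0; have [x2 e2] := surj 0 1.
case: e1 => d1 d1'; case: e2 => d2 d2'.
have dist m m' : m \in msupp P -> m' \in msupp P -> m != m' ->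
    exists y, chi m y != chi m' y.
  move=> _ _ mm'; apply: contrapT => hne.
  have eqc y : chi m y = chi m' y by case: (eqVneq (chi m y) (chi m' y)) => // h; exfalso; apply: hne; exists y.
  move/negP: mm'; apply; apply/eqP/mnmP => i.
  have hi x m0 : E x * E (c * x) * d (chi m0 x) =
      (chi m0 x * E (c * x) * d (E x)) *+ (m0 ord0) + (chi m0 x * E x * d (E (c * x))) *+ (m0 ord_max).
    by rewrite /chi der_mon.
  have nz x m0 : chi m0 x != 0 by rewrite /chi mulf_neq0 // expf_neq0 // Enz.
  have := hi x1 m; have := hi x1 m'; rewrite eqc d1 d1' !mulr0 !mul0rn !addr0 !mulr1 => -> /(mulrn_inj char0) h0.
  have := hi x2 m; have := hi x2 m'; rewrite eqc d2 d2' !mulr0 !mul0rn !add0r !mulr1 => -> /(mulrn_inj char0) h1.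
  have {}h0 := h0 (mulf_neq0 (nz _ _) (Enz _)).
  have {}h1 := h1 (mulf_neq0 (nz _ _) (Enz _)).
  case: i => [[|[|k]] hk] //.
    by rewrite (_ : Ordinal hk = ord0) //; apply: val_inj.
    by rewrite (_ : Ordinal hk = ord_max) //; apply: val_inj.
have := dedekind hom one (msupp_uniq P) dist Hs.
have : msupp P != [::] by rewrite msupp_eq0.
case: (msupp P) (@mcoeff_msupp _ _ P) => [|m s] // hm _ /(_ m).
by move: (hm m); rewrite inE eqxx /= => /esym /negP h /(_ isT) /eqP.
Qed.

End Forward.

Lemma horner_map_gen (R S : nzRingType) (g : R -> S) (p : {poly R}) (x : S) :
  (map_poly g p).[x] = \sum_(i < size p) g p`_i * x ^+ i.
Proof.
rewrite (horner_coef_wide _ (size_poly _ _)); apply: eq_bigr => i _.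
by rewrite coef_poly ltn_ord.
Qed.

Section UPextra.
Variables (I : Type) (U : set_system I) (HU : UltraFilter U) (K : fieldType).
Local Notation Q := (@UPt I U K HU).

Lemma cls_sum n (F : 'I_n -> I -> K) :
  \sum_(i < n) cls HU (F i) = cls HU (fun s => \sum_(i < n) F i s).
Proof.
elim: n F => [|n IH] F.
  by rewrite big_ord0 uzeroE; congr cls; apply: funext => s; rewrite big_ord0.
rewrite big_ord_recr IH /= uaddE'; congr cls; apply: funext => s.
by rewrite big_ord_recr.
Qed.

Lemma cls_exp (f : I -> K) n : (cls HU f) ^+ n = cls HU (fun s => f s ^+ n).
Proof.
elim: n => [|n IH]; first by rewrite expr0 uoneE; congr cls; apply: funext => s.
by rewrite exprS IH umulE'; congr cls; apply: funext => s; rewrite exprS.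
Qed.

Lemma hornerQ (A : nzRingType) (f : A -> I -> K) (p : {poly A}) (z : I -> K) :
  (map_poly (fun a => cls HU (f a)) p).[cls HU z]
  = cls HU (fun s => (map_poly (fun a => f a s) p).[z s]).
Proof.
rewrite horner_map_gen.
have -> : \sum_(i < size p) cls HU (f p`_i) * cls HU z ^+ i
  = \sum_(i < size p) cls HU (fun s => f p`_i s * z s ^+ i).
  by apply: eq_bigr => i _; rewrite cls_exp umulE'.
rewrite cls_sum; congr cls; apply: funext => s; by rewrite horner_map_gen.
Qed.

Lemma cls_inj_const (k k' : K) : cls HU (fun _ => k) = cls HU (fun _ => k') -> k = k'.
Proof.
move/cls_eqP => e; case: (eqVneq k k') => // ne; exfalso; apply: (U0 HU).
by apply: (US HU) e => s /eqP; rewrite (negbTE ne).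
Qed.

End UPextra.

Section Backward.
Variables (S : sig) (T : lform S -> Prop).
Hypothesis HT0 : forall M : struc S, models T M -> [pchar (scar M)] =i pred0.
Variables (Kd : dstruc S) (Hec : ec_model T Kd) (c : scar (dbase Kd)).
Local Notation M := (dbase Kd).
Local Notation K := (scar (dbase Kd)).
Local Notation E := (sE (dbase Kd)).
Local Notation d := (dder Kd).
Hypothesis Hd : zariski_dense2 (fun y z => exists x, y = E x /\ z = E (c * x)).

Lemma modK : models T M. Proof. by case: Hec => [[]]. Qed.
Lemma char0K : [pchar K] =i pred0. Proof. exact: HT0 modK. Qed.

Lemma dens2 (G : {poly {poly K}}) : G != 0 -> exists x, ev2 G (E x) (E (c * x)) != 0.
Proof.
move=> G0; have P0 : to_mp G != 0.
  apply/negP => /eqP e; move/negP: G0; apply; apply/eqP; apply: (ev2_vanish char0K) => y z.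
  by rewrite -to_mpE e meval0.
have [a [b [[x [-> ->]] h]]] := Hd P0.
by exists x; rewrite -to_mpE.
Qed.

Lemma ev2M (G H : {poly {poly K}}) (y z : K) : ev2 (G * H) y z = ev2 G y z * ev2 H y z.
Proof. by rewrite /ev2 rmorphM hornerM. Qed.

Lemma ev2_prod (s : seq {poly {poly K}}) y z :
  ev2 (\prod_(G <- s | G != 0) G) y z = \prod_(G <- s | G != 0) ev2 G y z.
Proof.
elim: s => [|G s IH]; first by rewrite !big_nil /ev2 rmorph1 hornerC.
rewrite !big_cons; case: ifP => _ //; by rewrite ev2M IH.
Qed.

Definition Ix := seq {poly {poly K}}.
Definition xgood (s : Ix) (x : K) := forall G, G \in s -> G != 0 -> ev2 G (E x) (E (c * x)) != 0.
Definition xs (s : Ix) : K := epsilon (inhabits 0) (xgood s).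

Lemma xsP s : xgood s (xs s).
Proof.
apply: (epsilon_spec (inhabits 0) (xgood s)).
have P0 : \prod_(G <- s | G != 0) G != 0 by rewrite prodf_seq_neq0; apply/allP => G _; apply/implyP.
have [x hx] := dens2 P0; exists x => G Gs G0.
move: hx; rewrite ev2_prod prodf_seq_neq0 => /allP /(_ G Gs) /implyP; exact.
Qed.

Definition F0 : set_system Ix := fun X => exists s : Ix, forall t, {subset s <= t} -> X t.

Lemma F0_proper : ProperFilter F0.
Proof.
apply: Build_ProperFilter.
  by move=> [s hs]; apply: (hs s).
apply: Build_Filter.
- by exists [::].
- move=> A B [s1 h1] [s2 h2]; exists (s1 ++ s2) => t st; split.
    by apply: h1 => x xs1; apply: st; rewrite mem_cat xs1.
  by apply: h2 => x xs2; apply: st; rewrite mem_cat xs2 orbT.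
- by move=> A B AB [s hs]; exists s => t st; apply: AB; apply: hs.
Qed.

Definition Uf : set_system Ix :=
  epsilon (inhabits F0) (fun G => UltraFilter G /\ (F0 `<=` G)%classic).
Lemma UfP : UltraFilter Uf /\ (F0 `<=` Uf)%classic.
Proof.
apply: (epsilon_spec (inhabits F0) (fun G => UltraFilter G /\ (F0 `<=` G)%classic)).
exact: ultraFilterLemma F0_proper.
Qed.
Definition HUf : UltraFilter Uf := proj1 UfP.
Lemma F0Uf X : F0 X -> Uf X. Proof. exact: (proj2 UfP). Qed.

Local Notation Q := (@UPt Ix Uf K HUf).
Definition hh (k : K) : Q := cls HUf (fun _ => k).
Definition xi : Q := cls HUf xs.
Definition uu : Q := cls HUf (fun s => E (xs s)).
Definition ww : Q := cls HUf (fun s => E (c * xs s)).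

Lemma ev2_expand (gs : nat -> nat -> K) n m y z :
  ev2 (\poly_(i < n) \poly_(j < m) gs i j) y z
  = \sum_(i < n) (\sum_(j < m) gs i j * y ^+ j) * z ^+ i.
Proof.
rewrite /ev2 (horner_coef_wide (n := n)); last first.
  exact: leq_trans (size_poly _ _) (size_poly _ _).
apply: eq_bigr => i _; rewrite coef_map coef_poly ltn_ord /= horner_evalE; congr (_ * _).
rewrite (horner_coef_wide (n := m)) ?size_poly //; apply: eq_bigr => j _.
by rewrite coef_poly ltn_ord.
Qed.

Lemma generic (gs : nat -> nat -> K) n m :
  \sum_(i < n) (\sum_(j < m) hh (gs i j) * uu ^+ j) * ww ^+ i = 0 ->
  forall i j, (i < n)%N -> (j < m)%N -> gs i j = 0.
Proof.
pose G := \poly_(i < n) \poly_(j < m) gs i j.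
have -> : \sum_(i < n) (\sum_(j < m) hh (gs i j) * uu ^+ j) * ww ^+ i
   = cls HUf (fun s => ev2 G (E (xs s)) (E (c * xs s))).
  have -> : (fun s => ev2 G (E (xs s)) (E (c * xs s)))
     = (fun s => \sum_(i < n) (\sum_(j < m) gs i j * E (xs s) ^+ j) * E (c * xs s) ^+ i).
    by apply: funext => s; rewrite /G ev2_expand.
  rewrite -cls_sum; apply: eq_bigr => i _; rewrite /ww cls_exp.
  have -> : \sum_(j < m) hh (gs i j) * uu ^+ j
    = \sum_(j < m) cls HUf (fun s => gs i j * E (xs s) ^+ j).
    by apply: eq_bigr => j _; rewrite /uu /hh cls_exp umulE'.
  by rewrite cls_sum umulE'.
rewrite uzeroE => /cls_eqP e.
have G0 : G = 0.
  apply/eqP; apply: contraT => G0; exfalso; apply: (U0 HUf).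
  have hG : Uf (fun s : Ix => G \in s).
    by apply: F0Uf; exists [:: G] => t st; apply: st; rewrite inE.
  have := UI HUf e hG; apply: (US HUf) => s [es Gs].
  by have := xsP Gs G0; rewrite es eqxx.
move=> i j hi hj.
have := congr1 (fun q : {poly {poly K}} => q`_i`_j) G0.
by rewrite /G coef_poly hi coef_poly hj !coef0.
Qed.


Lemma hhD x y : hh (x + y) = hh x + hh y. Proof. by rewrite /hh uaddE'. Qed.
Lemma hhM x y : hh (x * y) = hh x * hh y. Proof. by rewrite /hh umulE'. Qed.
Lemma hhN x : hh (- x) = - hh x. Proof. by rewrite /hh uoppE'. Qed.
Lemma hhB x y : hh (x - y) = hh x - hh y. Proof. by rewrite hhD hhN. Qed.
Lemma hh0 : hh 0 = 0. Proof. by []. Qed.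
Lemma hh1 : hh 1 = 1. Proof. by []. Qed.
Lemma hh_inj x y : hh x = hh y -> x = y. Proof. exact: cls_inj_const. Qed.

Definition R0h (y : Q) := exists k, y = hh k.
Definition pre (y : Q) : K := epsilon (inhabits 0) (fun k => y = hh k).
Lemma preP y : R0h y -> y = hh (pre y).
Proof. by move=> h; apply: (epsilon_spec (inhabits 0) (fun k => y = hh k)). Qed.
Lemma pre_hh k : pre (hh k) = k.
Proof. by apply: hh_inj; rewrite -preP //; exists k. Qed.
Definition D0h (y : Q) : Q := hh (d (pre y)).
Lemma D0hE k : D0h (hh k) = hh (d k). Proof. by rewrite /D0h pre_hh. Qed.

Lemma isderK : is_derivation Kd. Proof. by case: Hec => [[]]. Qed.

Lemma sR0 : subring R0h.
Proof.
split; first by exists 1.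
- by move=> _ _ [x ->] [y ->]; exists (x - y); rewrite hhB.
- by move=> _ _ [x ->] [y ->]; exists (x * y); rewrite hhM.
Qed.

Lemma dD0 : pder R0h D0h.
Proof.
have [dA dM] := isderK.
split.
- by move=> _ _ [x ->] [y ->]; rewrite -hhD !D0hE dA hhD.
- by move=> _ _ [x ->] [y ->]; rewrite -hhM !D0hE dM hhD !hhM.
Qed.

Lemma T1 g : polyR R0h g -> g.[uu] = 0 -> g = 0.
Proof.
move=> hg gu.
have kP i : g`_i = hh (pre g`_i) by apply: preP.
have := generic (gs := fun _ j => pre g`_j) (n := 1) (m := size g).
rewrite big_ord1 expr0 mulr1.
have <- : g.[uu] = \sum_(j < size g) hh (pre g`_j) * uu ^+ j.
  by rewrite horner_coef; apply: eq_bigr => j _; rewrite -kP.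
move=> /(_ gu 0%N) h; apply/polyP => j; rewrite coef0.
case: (ltnP j (size g)) => hj; last by rewrite nth_default.
by rewrite kP h // hh0.
Qed.

Lemma T2 g : polyR (adj R0h uu) g -> g.[ww] = 0 -> g = 0.
Proof.
move=> hg gw.
pose r i := epsilon (inhabits 0) (fun r => polyR R0h r /\ g`_i = r.[uu]).
have rP i : polyR R0h (r i) /\ g`_i = (r i).[uu].
  by apply: (epsilon_spec (inhabits 0) (fun r => polyR R0h r /\ g`_i = r.[uu])); apply: hg.
have kP i j : (r i)`_j = hh (pre (r i)`_j) by apply: preP; case: (rP i) => h _; apply: h.
pose m := (\max_(i < size g) size (r i))%N.
have sm (i : 'I_(size g)) : (size (r i) <= m)%N by apply: (leq_bigmax (F := fun i : 'I_(size g) => size (r i))).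
have := generic (gs := fun i j => pre (r i)`_j) (n := size g) (m := m).
have <- : g.[ww] = \sum_(i < size g) (\sum_(j < m) hh (pre (r i)`_j) * uu ^+ j) * ww ^+ i.
  rewrite horner_coef; apply: eq_bigr => i _; congr (_ * _).
  case: (rP i) => _ ->; rewrite (horner_coef_wide _ (sm i)).
  by apply: eq_bigr => j _; rewrite -kP.
move=> /(_ gw) h; apply/polyP => i; rewrite coef0.
case: (ltnP i (size g)) => hi; last by rewrite nth_default.
case: (rP i) => _ ->.
have -> : r i = 0.
  apply/polyP => j; rewrite coef0.
  case: (ltnP j (size (r i))) => hj; last by rewrite nth_default.
  rewrite kP (h i j hi) ?hh0 //.
  exact: leq_trans hj (sm (Ordinal hi)).
by rewrite horner0.
Qed.

Definition Bst : struc S := UPst M HUf.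

Lemma modB : models T Bst.
Proof.
move=> phi Tphi v.
have -> : v = (fun j => cls HUf (fun s => rep (v j) s)) by apply: funext => j; rewrite clsK.
apply/(los HUf phi (fun s j => rep (v j) s)); apply: (Uall HUf) => s.
exact: modK.
Qed.

Lemma char0B : [pchar (scar Bst)] =i pred0. Proof. exact: HT0 modB. Qed.

Lemma Uconst (P : Prop) : Uf (fun _ => P) <-> P.
Proof.
split=> [h|p]; last exact: (Uall HUf).
apply: contrapT => np; apply: (U0 HUf); by apply: (US HUf) h.
Qed.

Lemma backward_main (a b : K) : exists x, d (E x) = a /\ d (E (c * x)) = b.
Proof.
have cond1 g : polyR R0h g -> g.[uu] = 0 -> Phi D0h uu (hh a) g = 0.
  by move=> hg gu; rewrite (T1 hg gu); apply: (Phi_0 sR0 dD0).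
have [D1 [sR1 dD1 ext1 Ru D1u]] := adjoin sR0 dD0 cond1.
have cond2 g : polyR (adj R0h uu) g -> g.[ww] = 0 -> Phi D1 ww (hh b) g = 0.
  by move=> hg gw; rewrite (T2 hg gw); apply: (Phi_0 sR1 dD1).
have [D2 [sR2 dD2 ext2 Rw D2w]] := adjoin sR1 dD1 cond2.
have [D [DA DM DE]] := der_extend char0B sR2 dD2.
have Dh k : D (hh k) = hh (d k).
  have [r1 e1] := ext1 (hh k) (ex_intro _ k erefl).
  have [r2 e2] := ext2 (hh k) r1.
  by rewrite DE // e2 e1 D0hE.
have Du : D uu = hh a.
  have [r2 e2] := ext2 uu Ru.
  by rewrite DE // e2 D1u.
have Dw : D ww = hh b by rewrite DE // D2w.
pose Bd := @DStruc S Bst D.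
have modBd : models_TMd T Bd by split; [exact: modB|split].
have emb : lmd_embedding (M := Kd) (B := Bd) hh.
  split; first exact: hhD.
  split; first exact: hhM.
  split; first exact: hhN.
  split; first exact: hh0.
  split; first exact: hh1.
  split; first by move=> x; rewrite /= /hh uEE.
  split; first by move=> f g; rewrite /= /hh (uFE HUf (fun k _ => g k)).
  split; first by move=> x; rewrite /= Dh.
  move=> phi v; rewrite /=.
  have := los HUf phi (fun _ j => v j); rewrite /=.
  by move=> ->; rewrite Uconst.
have [_ ecH] := Hec.
pose psi := QAnd (QEq (DDer (DExp (DVar S 0))) (DVar S 1))
                 (QEq (DDer (DExp (DMul (DVar S 2) (DVar S 0)))) (DVar S 3)).
pose v : nat -> K := fun j => if j == 1%N then a else if j == 2%N then c else b.
have [w' [hw' [q1 q2]]] : exists w' : nat -> K,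
    (forall i, i \notin [:: 0%N] -> w' i = v i) /\ qsat (M := Kd) w' psi.
  apply: ecH; exists Bd, hh; split => //; split => //.
  exists (fun j => if j == 0%N then xi else hh (v j)); split.
    by move=> i; rewrite inE => /negbTE ->.
  rewrite /psi /=; split.
    by rewrite /xi uEE -/uu Du.
  have -> : hh (v 2%N) * xi = cls HUf (fun s => c * xs s) by rewrite /hh /xi umulE'.
  by rewrite uEE -/ww Dw.
exists (w' 0%N); move: q1 q2; rewrite /= (hw' 1%N) // (hw' 2%N) // (hw' 3%N) //.
Qed.

End Backward.

Unset Implicit Arguments.

Theorem corollary2p4 (S : sig) (T : lform S -> Prop)
  (* T expands the theory of fields of characteristic 0 *)
  (HT0 : forall M : struc S, models T M -> [pchar (scar M)] =i pred0)
  (* T proves E(x+y) = E(x) E(y) *)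
  (HTE : forall M : struc S, models T M ->
           forall x y : scar M, sE M (x + y) = sE M x * sE M y)
  (* T proves exists z, E(z) <> 1 *)
  (HTz : forall M : struc S, models T M -> exists z : scar M, sE M z != 1)
  (Kd : dstruc S) (Hec : ec_model T Kd) (c : scar (dbase Kd)) :
  let E := sE (dbase Kd) in
  let d := dder Kd in
  (forall a b : scar (dbase Kd),
      exists x, (d (E x), d (E (c * x))) = (a, b))
  <-> zariski_dense2 (fun y z => exists x, y = E x /\ z = E (c * x)).
Proof.
move=> E d.
have mK := modK Hec.
have [dA dM] := isderK Hec.
split.
- move=> surj.
  exact: (surj_dense (char0K HT0 Hec) (HTE _ mK) dA dM surj).
- move=> Hd a b.
  have [x [h1 h2]] := backward_main HT0 Hec Hd a b.
  by exists x; rewrite /d /E h1 h2.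
Qed.
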